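(* Let $n\ge1$ and $P=[2]\times[n]$. The statistic $I\mapsto|\mathrm{Max}(I)|-|\mathrm{Min}(I)|$ (number of maximal elements of $I$ minus number of minimal elements of $I$) is $0$-mesic under rowmotion on $\mathcal{IC}(P)$.
   Context: $[n]$ is the chain $1<\cdots<n$; $[2]\times[n]$ has the componentwise order. All posets are finite. A subset $I\subseteq P$ is interval-closed if for all $x,y\in I$ and $z\in P$ with $x\le z\le y$ we have $z\in I$; $\mathcal{IC}(P)$ is the set of interval-closed subsets of $P$. For $x\in P$ the toggle $t_x:\mathcal{IC}(P)\to\mathcal{IC}(P)$ is defined by $t_x(I)=I\triangle\{x\}$ if $I\triangle\{x\}\in\mathcal{IC}(P)$ and $t_x(I)=I$ otherwise. Rowmotion is $\mathrm{Row}=t_{x_1}\circ t_{x_2}\circ\cdots\circ t_{x_N}$, where $(x_1,\dots,x_N)$ is a linear extension of $P$ (toggling from the top down). $\mathrm{Max}(I)$ and $\mathrm{Min}(I)$ are the sets of maximal and minimal elements of $I$ (empty if $I=\emptyset$). A statistic is $c$-mesic if its average over every rowmotion orbit equals $c$. *)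

(* Defs.v *)
From mathcomp Require Import all_boot all_order all_algebra.
Set Implicit Arguments. Unset Strict Implicit. Unset Printing Implicit Defensive.
Import GRing.Theory Num.Theory.

Section Generic.
Variables (T : finType) (le : rel T).

Definition interval_closed (I : {set T}) : bool :=
  [forall x in I, forall y in I, forall z, (le x z && le z y) ==> (z \in I)].

Definition toggle (x : T) (I : {set T}) : {set T} :=
  let J := (I :\: [set x]) :|: ([set x] :\: I) in
  if interval_closed J then J else I.

Definition linear_extension (L : seq T) : Prop :=
  uniq L /\ (forall x, x \in L) /\
  (forall x y, le x y -> index x L <= index y L).

(* Row = t_{x_1} o t_{x_2} o ... o t_{x_N}  (t_{x_N} applied first) *)
Definition rowmotion (L : seq T) (I : {set T}) : {set T} :=
  foldr toggle I L.

Definition Maxs (I : {set T}) : {set T} :=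
  [set x in I | [forall y in I, le x y ==> (y == x)]].
Definition Mins (I : {set T}) : {set T} :=
  [set x in I | [forall y in I, le y x ==> (y == x)]].

Definition mesic (f : {set T} -> {set T}) (dom : pred {set T})
    (stat : {set T} -> rat) (c : rat) : Prop :=
  forall I, dom I ->
    ((\sum_(J <- orbit f I) stat J) / (size (orbit f I))%:R = c)%R.
End Generic.

(* The product poset [2] x [n], elements (i, j) with i < 2, j < n
   (0-based), ordered componentwise. *)
Definition two_by_n (n : nat) : finType := ('I_2 * 'I_n)%type.
Definition le2n (n : nat) : rel (two_by_n n) :=
  fun x y => (x.1 <= y.1)%N && (x.2 <= y.2)%N.

Definition max_minus_min (T : finType) (le : rel T) (I : {set T}) : rat :=
  (#|Maxs le I|%:R - #|Mins le I|%:R)%R.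

(* Main.v *)
Require Import Defs.
From mathcomp Require Import all_boot all_order all_algebra.
From mathcomp Require Import zify lra.
From Stdlib Require Import Classical ClassicalEpsilon.
Set Implicit Arguments. Unset Strict Implicit. Unset Printing Implicit Defensive.

Section Gen.
Variables (T : finType) (le : rel T).
Local Notation IC := (interval_closed le).
Local Notation tog := (toggle le).

Lemma ICP (S : {set T}) :
  reflect (forall x y z, x \in S -> y \in S -> le x z -> le z y -> z \in S) (IC S).
Proof.
apply: (iffP forallP) => [H x y z xS yS lxz lzy|H x].
  by move/implyP: (H x) => /(_ xS) /forallP /(_ y) /implyP /(_ yS) /forallP /(_ z) /implyP; apply; rewrite lxz.
apply/implyP => xS; apply/forallP => y; apply/implyP => yS; apply/forallP => z.
by apply/implyP => /andP[a b]; apply: H a b.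
Qed.

Definition symd (x : T) (S : {set T}) := (S :\: [set x]) :|: ([set x] :\: S).

Lemma symdE x S y : (y \in symd x S) = (if y == x then x \notin S else y \in S).
Proof. by rewrite !inE; case: eqP => [->|_]; rewrite ?andbT ?andbF ?orbF. Qed.

Lemma toggleE x S : tog x S = if IC (symd x S) then symd x S else S.
Proof. by []. Qed.

Lemma toggle_ic x S : IC S -> IC (tog x S).
Proof. by rewrite toggleE; case: ifP. Qed.

Lemma foldr_ic s S : IC S -> IC (foldr tog S s).
Proof. by elim: s => //= a s IH /IH; apply: toggle_ic. Qed.

Lemma toggle_other x S y : y != x -> (y \in tog x S) = (y \in S).
Proof. by move=> yx; rewrite toggleE; case: ifP => // _; rewrite symdE (negbTE yx). Qed.

Lemma foldr_notin s S y : y \notin s -> (y \in foldr tog S s) = (y \in S).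
Proof.
elim: s => //= a s IH; rewrite inE negb_or => /andP[ya ys].
by rewrite toggle_other // IH.
Qed.

Lemma symdK x S : symd x (symd x S) = S.
Proof.
apply/setP => y; rewrite symdE; case: eqP => [->|/eqP yx]; first by rewrite symdE eqxx negbK.
by rewrite symdE (negbTE yx).
Qed.

Lemma toggle_invol x S : IC S -> tog x (tog x S) = S.
Proof.
move=> icS; rewrite [tog x S]toggleE; case: ifP => HJ.
  by rewrite toggleE symdK icS.
by rewrite toggleE HJ.
Qed.

Lemma foldr_rev_invol s S : IC S -> foldr tog (foldr tog S s) (rev s) = S.
Proof.
elim: s S => // a s IH S icS.
rewrite rev_cons -cats1 foldr_cat /= toggle_invol ?foldr_ic //; exact: IH.
Qed.

Lemma toggle_mem_in x S : IC S -> x \in S ->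
  (x \in tog x S) <-> (exists a b, [/\ a \in S, b \in S, a != x, b != x & le a x && le x b]).
Proof.
move=> icS xS; rewrite toggleE.
have xJ : x \in symd x S = false by rewrite symdE eqxx xS.
case: ifP => HJ; rewrite ?xJ ?xS; split => //.
- case=> a [b [aS bS ax bx /andP[lax lxb]]].
  have := (ICP _ HJ) a b x; rewrite !symdE (negbTE ax) (negbTE bx) eqxx xS.
  by move=> /(_ aS bS lax lxb).
- move=> _; apply: NNPP => H0; move/negbT/negP: HJ; apply; apply/ICP => a b z.
  rewrite !symdE; case: (eqVneq a x) => [->|ax]; first by rewrite xS.
  case: (eqVneq b x) => [->|bx]; first by rewrite xS.
  move=> aS bS laz lzb; case: (eqVneq z x) => [ezx|zx]; last by apply: (ICP _ icS) aS bS laz lzb.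
  exfalso; apply: H0; exists a, b; split => //; by rewrite -ezx laz lzb.
Qed.

Lemma toggle_mem_out x S : IC S -> x \notin S -> (forall u v, le u v -> le v u -> u = v) ->
  (forall u v w, le u v -> le v w -> le u w) ->
  (x \in tog x S) <->
  ((forall b z, b \in S -> le x b -> le x z -> le z b -> z != x -> z \in S) /\
   (forall a z, a \in S -> le a x -> le a z -> le z x -> z != x -> z \in S)).
Proof.
move=> icS xS anti tr; rewrite toggleE.
have xJ : x \in symd x S by rewrite symdE eqxx xS.
have bxS b : b \in S -> b != x by apply: contraTneq => ->.
case: ifP => HJ; rewrite ?xJ ?(negbTE xS); split => //.
- move=> _; split.
  + move=> b z bS lxb lxz lzb zx.
    have bJ : b \in symd x S by rewrite symdE (negbTE (bxS _ bS)).
    by have := (ICP _ HJ) x b z xJ bJ lxz lzb; rewrite symdE (negbTE zx).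
  + move=> a z aS lax laz lzx zx.
    have aJ : a \in symd x S by rewrite symdE (negbTE (bxS _ aS)).
    by have := (ICP _ HJ) a x z aJ xJ laz lzx; rewrite symdE (negbTE zx).
- case=> H1 H2; exfalso; move/negbT/negP: HJ; apply; apply/ICP => a b z.
  rewrite !symdE; case: (eqVneq z x) => [->//|zx].
  case: (eqVneq a x) => [->|ax]; case: (eqVneq b x) => [->|bx].
  + by move=> _ _ l1 l2; rewrite (anti _ _ l1 l2) eqxx in zx.
  + by move=> _ bS l1 l2; apply: H1 bS (tr _ _ _ l1 l2) l1 l2 zx.
  + by move=> aS _ l1 l2; apply: H2 aS (tr _ _ _ l1 l2) l1 l2 zx.
  + by move=> aS bS l1 l2; apply: (ICP _ icS) aS bS l1 l2.
Qed.

Section Rec.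
Hypothesis anti : forall u v, le u v -> le v u -> u = v.
Hypothesis tr : forall u v w, le u v -> le v w -> le u w.

Lemma row_rec L I x : linear_extension le L -> IC I ->
 (x \in rowmotion le L I) <->
 (if x \in I then (exists a, [/\ a != x, le a x & a \in I]) /\
                  (exists b, [/\ b != x, le x b & b \in rowmotion le L I])
  else (forall b z, b != x -> b \in rowmotion le L I -> le x b -> le x z -> le z b -> z != x ->
                    z \in rowmotion le L I) /\
       (forall a z, a != x -> a \in I -> le a x -> le a z -> le z x -> z != x -> z \in I)).
Proof.
move=> [uL [allL idxL]] icI.
have [pre [suf eL]] : exists pre suf, L = pre ++ x :: suf.
  by case/splitPr: (allL x) => p1 p2; exists p1, p2.
rewrite eL cat_uniq /= in uL; case/and4P: uL => _ /norP[xpre npre] xsuf _.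
have idxx : index x L = size pre by rewrite eL index_cat (negbTE xpre) /= eqxx addn0.
set S := foldr tog I suf.
have icS : IC S by apply: foldr_ic.
have eR : rowmotion le L I = foldr tog (tog x S) pre by rewrite /rowmotion eL foldr_cat.
have Rx : (x \in rowmotion le L I) = (x \in tog x S) by rewrite eR foldr_notin.
have xS : (x \in S) = (x \in I) by rewrite /S foldr_notin.
have lowS y : y != x -> le y x -> (y \in S) = (y \in I).
  move=> yx lyx; rewrite /S foldr_notin //; apply/negP => ys.
  have ypre : y \notin pre by apply: contraNN npre => yp; apply/hasP; exists y; rewrite // inE ys orbT.
  have := idxL _ _ lyx; rewrite idxx eL index_cat (negbTE ypre) /= eq_sym (negbTE yx).
  by rewrite addnS ltnNge leq_addr.
have highR y : y != x -> le x y -> (y \in rowmotion le L I) = (y \in S).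
  move=> yx lxy; rewrite eR foldr_notin ?toggle_other //; apply/negP => yp.
  have := idxL _ _ lxy; rewrite idxx eL index_cat yp.
  by rewrite leqNgt index_mem yp.
have nx y : y \in S -> x \notin S -> y != x by move=> yS; apply: contraNneq => <-.
rewrite Rx -xS; case: ifP => xSb.
- rewrite toggle_mem_in //; split.
  + case=> a [b [aS bS ax bx /andP[lax lxb]]]; split.
    * by exists a; split => //; rewrite -lowS.
    * by exists b; split => //; rewrite highR.
  + case=> [[a [ax lax aI]] [b [bx lxb bR]]]; exists a, b; split => //.
    * by rewrite lowS.
    * by rewrite -highR.
    * by rewrite lax lxb.
- rewrite toggle_mem_out ?xSb //; split.
  + case=> H1 H2; split.
    * move=> b z bx bR lxb lxz lzb zx; rewrite highR //.
      by apply: (H1 b z) => //; rewrite -(highR b).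
    * move=> a z ax aI lax laz lzx zx; rewrite -lowS //.
      by apply: (H2 a z) => //; rewrite lowS.
  + case=> H1 H2; split.
    * move=> b z bS lxb lxz lzb zx.
      have bx : b != x by apply: nx bS _; rewrite xSb.
      by rewrite -highR //; apply: (H1 b z) => //; rewrite highR.
    * move=> a z aS lax laz lzx zx.
      have ax : a != x by apply: nx aS _; rewrite xSb.
      by rewrite lowS //; apply: (H2 a z) => //; rewrite -lowS.
Qed.
End Rec.
End Gen.

Lemma index_rev (U : eqType) (s : seq U) x : uniq s -> x \in s ->
  index x (rev s) = size s - (index x s).+1.
Proof.
elim: s => //= a s IH /andP[aNs us]; rewrite inE rev_cons -cats1 index_cat mem_rev.
case: (eqVneq x a) => [->|xa] /=; first by rewrite (negbTE aNs) eqxx addn0 size_rev subn1.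
by move=> xs; rewrite xs IH // (negbTE xa) subSS.
Qed.

Section Phi.
Variables (T : finType) (le : rel T) (phi : T -> T).
Hypothesis phiK : involutive phi.
Hypothesis lephi : forall x y, le (phi x) (phi y) = le y x.
Local Notation IC := (interval_closed le).
Local Notation tog := (toggle le).

Lemma phi_inj : injective phi. Proof. exact: inv_inj. Qed.

Lemma PS_mem (S : {set T}) y : (y \in phi @: S) = (phi y \in S).
Proof. by rewrite -{1}(phiK y) mem_imset //; apply: phi_inj. Qed.

Lemma PSK (S : {set T}) : phi @: (phi @: S) = S.
Proof. by apply/setP => y; rewrite !PS_mem phiK. Qed.

Lemma PS_ic (S : {set T}) : IC S -> IC (phi @: S).
Proof.
move=> /ICP icS; apply/ICP => a b z; rewrite !PS_mem => aS bS laz lzb.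
by apply: (icS _ _ _ bS aS); rewrite lephi.
Qed.

Lemma PS_icE (S : {set T}) : IC (phi @: S) = IC S.
Proof. by apply/idP/idP => [/PS_ic|/PS_ic //]; rewrite PSK. Qed.

Lemma PS_symd x (S : {set T}) : symd (phi x) (phi @: S) = phi @: symd x S.
Proof.
apply/setP => y; rewrite PS_mem !symdE !PS_mem phiK.
have -> : (y == phi x) = (phi y == x) by rewrite -(inj_eq phi_inj) phiK.
by [].
Qed.

Lemma PS_toggle x (S : {set T}) : tog (phi x) (phi @: S) = phi @: tog x S.
Proof. by rewrite !toggleE PS_symd PS_icE; case: ifP. Qed.

Lemma PS_foldr s (S : {set T}) : foldr tog (phi @: S) (map phi s) = phi @: foldr tog S s.
Proof. by elim: s => //= a s ->; rewrite PS_toggle. Qed.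

Lemma PS_linext L : linear_extension le L -> linear_extension le (rev (map phi L)).
Proof.
case=> uL [allL idxL]; have umL : uniq (map phi L) by rewrite map_inj_uniq // ; apply: phi_inj.
have inL y : y \in map phi L by rewrite -(phiK y) map_f.
split; first by rewrite rev_uniq.
split; first by move=> y; rewrite mem_rev.
move=> x y lxy; rewrite !index_rev // size_map.
rewrite -(phiK x) -(phiK y) !index_map; try apply: phi_inj.
apply: leq_sub2l; rewrite ltnS; apply: idxL; by rewrite lephi.
Qed.

Lemma row_dual L I : linear_extension le L -> IC I ->
  rowmotion le (rev (map phi L)) (phi @: rowmotion le L I) = phi @: I.
Proof.
move=> _ icI; rewrite /rowmotion -PS_foldr foldr_rev_invol //; exact: PS_ic.
Qed.

Lemma row_inj L I J : linear_extension le L -> IC I -> IC J ->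
  rowmotion le L I = rowmotion le L J -> I = J.
Proof.
move=> lL icI icJ e; have := row_dual lL icI; rewrite e row_dual // => /(congr1 (fun S : {set T} => phi @: S)).
by rewrite !PSK.
Qed.
End Phi.

Section Tele.
Variables (T : finType) (f : {set T} -> {set T}) (dom : pred {set T}).
Variables (stat : {set T} -> rat) (h : {set T} -> bool).
Hypothesis fdom : forall I, dom I -> dom (f I).
Hypothesis finj : {in dom &, injective f}.
Hypothesis hstat : forall I, dom I -> stat I = ((h (f I))%:R - (h I)%:R)%R.

Lemma tele_sum k I :
  (\sum_(J <- traject f I k) ((h (f J))%:R - (h J)%:R) = (h (iter k f I))%:R - (h I)%:R :> rat)%R.
Proof.
elim: k I => [|k IH] I /=; first by rewrite big_nil GRing.subrr.
rewrite big_cons IH -iterSr /=.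
by rewrite GRing.addrC GRing.addrA GRing.subrK.
Qed.

Lemma mesic_tele : mesic f dom stat 0%R.
Proof.
move=> I dI.
have dit i : dom (iter i f I) by elim: i => //= i /fdom.
have dorb y : y \in orbit f I -> dom y by case/trajectP => i _ ->.
have cyc : iter (order f I) f I = I.
  apply: (@orbitPcycle _ f I 5 4).1 => y z /dorb dy /dorb dz; exact: finj.
rewrite (eq_big_seq (fun J => ((h (f J))%:R - (h J)%:R)%R)); last by move=> J /dorb /hstat.
by rewrite tele_sum cyc GRing.subrr GRing.mul0r.
Qed.
End Tele.


Section Conc.
Local Set Default Proof Using "Type".
Variable n : nat.
Local Notation T := (two_by_n n.+1).
Local Notation le := (@le2n n.+1).
Local Notation IC := (interval_closed le).

Definition pt (i j : nat) : T := (inord i, inord j).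

Lemma pt1 i j : i < 2 -> (pt i j).1 = i :> nat.
Proof. by move=> h; rewrite /= inordK. Qed.
Lemma pt2 i j : j <= n -> (pt i j).2 = j :> nat.
Proof. by move=> h; rewrite /= inordK. Qed.

Lemma ptP (x : T) : exists i j, [/\ i < 2, j <= n & x = pt i j].
Proof.
case: x => a b; exists a, b; split; [exact: ltn_ord | by rewrite -ltnS ltn_ord |].
by rewrite /pt !inord_val.
Qed.

Lemma le_pt i j i' j' : i < 2 -> i' < 2 -> j <= n -> j' <= n ->
  le (pt i j) (pt i' j') = (i <= i') && (j <= j').
Proof. by move=> *; rewrite /le2n !pt1 ?pt2. Qed.

Lemma pt_eq i j i' j' : i < 2 -> i' < 2 -> j <= n -> j' <= n ->
  (pt i j == pt i' j') = (i == i') && (j == j').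
Proof.
move=> hi hi' hj hj'; apply/eqP/andP => [e|[/eqP-> /eqP->]//].
split; apply/eqP; first by rewrite -(pt1 j hi) -(pt1 j' hi') e.
by rewrite -(pt2 i hj) -(pt2 i' hj') e.
Qed.

Lemma le_anti (u v : T) : le u v -> le v u -> u = v.
Proof.
case: u => a b; case: v => c d; rewrite /le2n /= => /andP[h1 h2] /andP[h3 h4].
by congr pair; apply: val_inj => /=; apply/eqP; rewrite eqn_leq ?h1 ?h2 ?h3 ?h4.
Qed.

Lemma le_tr (u v w : T) : le u v -> le v w -> le u w.
Proof.
rewrite /le2n => /andP[h1 h2] /andP[h3 h4]; apply/andP; split; [exact: leq_trans h1 h3|exact: leq_trans h2 h4].
Qed.

Definition phi (x : T) : T := (rev_ord x.1, rev_ord x.2).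
Lemma phiK : involutive phi.
Proof. by case=> a b; rewrite /phi /= !rev_ordK. Qed.
Lemma lephi x y : le (phi x) (phi y) = le y x.
Proof.
case: x => a b; case: y => c d; rewrite /le2n /phi /=.
have := ltn_ord a; have := ltn_ord b; have := ltn_ord c; have := ltn_ord d.
move=> *; apply/andP/andP; case=> *; split; lia.
Qed.

Lemma phi_pt i j : i < 2 -> j <= n -> phi (pt i j) = pt (1 - i) (n - j).
Proof.
move=> hi hj; rewrite (surjective_pairing (phi (pt i j))) /pt /phi /=.
congr pair; apply: val_inj; rewrite /= !inordK; lia.
Qed.

Lemma icpt (S : {set T}) i j i' j' i'' j'' : IC S -> pt i j \in S -> pt i' j' \in S ->
  i <= i'' <= i' -> i' < 2 -> j <= j'' <= j' -> j' <= n -> pt i'' j'' \in S.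
Proof.
move=> /ICP H h1 h2 /andP[a1 a2] a3 /andP[b1 b2] b3.
apply: (H _ _ _ h1 h2); rewrite le_pt ?a1 ?a2 ?b1 ?b2 //; lia.
Qed.

Lemma minrow (S : {set T}) i : (exists j, j <= n /\ pt i j \in S) ->
  exists a, [/\ a <= n, pt i a \in S & forall j, j <= n -> pt i j \in S -> a <= j].
Proof.
case=> j [hj hS]; have ex : exists j, (j <= n) && (pt i j \in S) by exists j; rewrite hj.
case: (ex_minnP ex) => a /andP[ha haS] hmin; exists a; split => // q hj' hjS.
by apply: hmin; rewrite hj'.
Qed.

Lemma maxrow (S : {set T}) i : (exists j, j <= n /\ pt i j \in S) ->
  exists a, [/\ a <= n, pt i a \in S & forall j, j <= n -> pt i j \in S -> j <= a].
Proof.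
case=> j [hj hS]; have ex : exists j, (j <= n) && (pt i j \in S) by exists j; rewrite hj.
have ub : forall j, (j <= n) && (pt i j \in S) -> j <= n by move=> k /andP[].
case: (ex_maxnP ex ub) => a /andP[ha haS] hmax; exists a; split => // q hj' hjS.
by apply: hmax; rewrite hj'.
Qed.

Definition hR (S : {set T}) := exists j k l, [/\ j < k, k <= l & l <= n] /\
  [/\ pt 1 j \in S, pt 0 k \in S, pt 1 l \in S & pt 0 j \notin S].
Definition hP (S : {set T}) := exists k l m, [/\ k <= l, l < m & m <= n] /\
  [/\ pt 0 k \in S, pt 1 l \in S, pt 0 m \in S & pt 1 m \notin S].

End Conc.


Ltac slia := repeat match goal with H : ?P |- _ =>
  lazymatch type of P with Prop =>
    lazymatch P with
    | is_true (_ <= _) => fail | is_true (~~ _) => fail | is_true (_ && _) => fail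
    | is_true (_ == _) => fail | @eq nat _ _ => fail | _ => clear H end end end; lia.

Section F.
Variable n : nat.
Local Notation T := (two_by_n n.+1).
Local Notation le := (@le2n n.+1).
Local Notation IC := (interval_closed le).
Local Notation pt := (@pt n).
Local Notation phi := (@phi n).

Ltac dpt x := let i := fresh "i" x in let j := fresh "j" x in
  let hi := fresh "hi" x in let hj := fresh "hj" x in
  have [i [j [hi hj ->]]] := ptP x.

Lemma forward L I : linear_extension le L -> IC I -> hP I -> hR (rowmotion le L I).
Proof.
move=> lL icI [k [l [m [[hkl hlm hm] [k0 l1 m0 m1]]]]].
have RR := row_rec (@le_anti n) (@le_tr n) (L := L) (I := I) _ lL icI.
have [a0 [ha0 a0I a0min]] := minrow (S := I) (i := 0) (ex_intro _ k (conj (leq_trans hkl (leq_trans (ltnW hlm) hm)) k0)).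
have [b1 [hb1 b1I b1max]] := maxrow (S := I) (i := 1) (ex_intro _ l (conj (leq_trans (ltnW hlm) hm) l1)).
have a0k : a0 <= k by apply: a0min => //; slia.
have lb1 : l <= b1 by apply: b1max => //; slia.
have b1m : b1 < m.
  rewrite ltnNge; apply/negP => mb1; move/negP: m1; apply.
  apply: (icpt (i := 1) (j := l) (i' := 1) (j' := b1)) => //; slia.
have hb1n : b1.+1 <= n by slia.
have B0 : pt 0 b1.+1 \in I by apply: (icpt (i := 0) (j := k) (i' := 0) (j' := m)) => //; slia.
have nI1 q : b1 < q -> q <= n -> pt 1 q \notin I.
  by move=> hq hqn; apply/negP => /(b1max _ hqn); slia.
have nR1 q : b1.+1 < q -> q <= n -> pt 1 q \notin rowmotion le L I.
  move=> hq hqn; apply/negP => /RR; rewrite (negbTE (nI1 _ _ _)) //; last by slia.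
  case=> _ /(_ (pt 1 b1) (pt 1 b1.+1)) H.
  have /negP := nI1 b1.+1 (ltnSn _) hb1n; apply.
  rewrite !le_pt ?pt_eq // in H.
  by apply: H; [slia|exact: b1I|slia|slia|slia|slia].
have R1 : pt 1 b1.+1 \in rowmotion le L I.
  have hx : (pt 1 b1.+1 \in I) = false by apply: negbTE; apply: nI1 => //; slia.
  apply: (proj2 (RR (pt 1 b1.+1))); rewrite hx; split.
  - move=> b z; dpt b; dpt z; rewrite !le_pt ?pt_eq //.
    move=> bx bR lxb lxz lzb zx; exfalso.
    have e : ib = 1 by slia.
    subst ib; move/negP: (nR1 jb ltac:(slia) hjb); apply; exact: bR.
  - move=> a z; dpt a; dpt z; rewrite !le_pt ?pt_eq //.
    move=> ax aI lax laz lzx zx.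
    case: (ltnP iz 1) => hz.
    + have e : iz = 0 by slia.
      have e' : ia = 0 by slia.
      subst; apply: (icpt icI aI B0); slia.
    + have e : iz = 1 by slia.
      subst; apply: (icpt icI aI b1I); slia.
have ha1n : a0.+1 <= n by slia.
have R0 : pt 0 a0.+1 \in rowmotion le L I.
  have hin : pt 0 a0.+1 \in I.
    by apply: (icpt icI a0I m0); slia.
  apply: (proj2 (RR _)); rewrite hin; split.
  - exists (pt 0 a0); split; [rewrite pt_eq //; slia | rewrite le_pt //; slia | exact: a0I].
  - exists (pt 1 b1.+1); split; [rewrite pt_eq //; slia | rewrite le_pt //; slia | exact: R1].
have R1a : pt 1 a0 \in rowmotion le L I.
  have hin : pt 1 a0 \in I.
    by apply: (icpt icI a0I l1); slia.
  apply: (proj2 (RR _)); rewrite hin; split.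
  - exists (pt 0 a0); split; [rewrite pt_eq //; slia | rewrite le_pt //; slia | exact: a0I].
  - exists (pt 1 b1.+1); split; [rewrite pt_eq //; slia | rewrite le_pt //; slia | exact: R1].
have nR0 : pt 0 a0 \notin rowmotion le L I.
  apply/negP => /RR; rewrite a0I; case=> [[a [ax lax aI]] _].
  move: ax lax aI; dpt a; rewrite pt_eq // le_pt // => ax lax aI.
  have e : ia = 0 by slia.
  subst; have := a0min ja hja aI; slia.
exists a0, a0.+1, b1.+1; split; first by split; slia.
by split.
Qed.

Lemma hR_phi (S : {set T}) : hR S -> hP (phi @: S).
Proof.
case=> [j [k [l [[hjk hkl hl] [j1 k0 l1 j0]]]]].
exists (n - l), (n - k), (n - j); split; first by split; slia.
have hk : k <= n by slia.
have hj : j <= n by slia.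
rewrite !(PS_mem (@phiK n)) !phi_pt ?leq_subr // !subKn // subn0.
Qed.

Lemma backward L I : linear_extension le L -> IC I -> hR (rowmotion le L I) -> hP I.
Proof.
move=> lL icI hRR.
have lL' := PS_linext (@phiK n) (@lephi n) lL.
have icR : IC (rowmotion le L I) by apply: foldr_ic.
have := forward lL' (PS_ic (@phiK n) (@lephi n) icR) (hR_phi hRR).
rewrite (row_dual (@phiK n) (@lephi n) lL icI) => /hR_phi.
by rewrite (PSK (@phiK n)).
Qed.

Definition Ei (I : {set T}) i := exists j, j <= n /\ pt i j \in I.
Definition Cn (I : {set T}) := exists k l, [/\ k <= l, l <= n, pt 0 k \in I & pt 1 l \in I].
Definition Mx (I : {set T}) i := exists j, j <= n /\ pt i j \in Maxs le I.
Definition Mn (I : {set T}) i := exists j, j <= n /\ pt i j \in Mins le I.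

Lemma maxs_pt I i j : i < 2 -> j <= n -> (pt i j \in Maxs le I) <-> (pt i j \in I /\
  forall i' j', i' < 2 -> j' <= n -> pt i' j' \in I -> i <= i' -> j <= j' -> i' = i /\ j' = j).
Proof.
move=> hi hj; rewrite inE; split.
- case/andP => xI /forallP H; split => // i' j' hi' hj' yI l1 l2.
  have := H (pt i' j'); rewrite yI le_pt // l1 l2 /= pt_eq // => /andP[/eqP ? /eqP ?]; done.
- case=> xI H; rewrite xI; apply/forallP => y; dpt y; apply/implyP => yI; apply/implyP.
  rewrite le_pt // pt_eq // => /andP[l1 l2]; have [-> ->] := H _ _ hiy hjy yI l1 l2.
  by rewrite !eqxx.
Qed.

Lemma mins_pt I i j : i < 2 -> j <= n -> (pt i j \in Mins le I) <-> (pt i j \in I /\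
  forall i' j', i' < 2 -> j' <= n -> pt i' j' \in I -> i' <= i -> j' <= j -> i' = i /\ j' = j).
Proof.
move=> hi hj; rewrite inE; split.
- case/andP => xI /forallP H; split => // i' j' hi' hj' yI l1 l2.
  have := H (pt i' j'); rewrite yI le_pt // l1 l2 /= pt_eq // => /andP[/eqP ? /eqP ?]; done.
- case=> xI H; rewrite xI; apply/forallP => y; dpt y; apply/implyP => yI; apply/implyP.
  rewrite le_pt // pt_eq // => /andP[l1 l2]; have [-> ->] := H _ _ hiy hjy yI l1 l2.
  by rewrite !eqxx.
Qed.

Section Facts.
Variable I : {set T}.
Hypothesis icI : IC I.

Lemma fa : Ei I 1 -> Mx I 1.
Proof.
move=> /maxrow [b [hb bI bmax]]; exists b; split => //; apply/maxs_pt => //; split => // i' j' hi hj yI l1 l2.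
have e : i' = 1 by slia.
subst; have := bmax j' hj yI; split => //; slia.
Qed.

Lemma fb : Ei I 0 -> Mn I 0.
Proof.
move=> /minrow [b [hb bI bmin]]; exists b; split => //; apply/mins_pt => //; split => // i' j' hi hj yI l1 l2.
have e : i' = 0 by slia.
subst; have := bmin j' hj yI; split => //; slia.
Qed.

Lemma fc : ~ Cn I -> Ei I 0 -> Mx I 0.
Proof.
move=> nC /maxrow [b [hb bI bmax]]; exists b; split => //; apply/maxs_pt => //; split => // i' j' hi hj yI l1 l2.
case: (ltnP i' 1) => hi'.
- have e : i' = 0 by slia.
  subst; have := bmax j' hj yI; split => //; slia.
- have e : i' = 1 by slia.
  by subst; exfalso; apply: nC; exists b, j'; split.
Qed.

Lemma fd : ~ Cn I -> Ei I 1 -> Mn I 1.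
Proof.
move=> nC /minrow [b [hb bI bmin]]; exists b; split => //; apply/mins_pt => //; split => // i' j' hi hj yI l1 l2.
case: (ltnP i' 1) => hi'.
- have e : i' = 0 by slia.
  by subst; exfalso; apply: nC; exists j', b; split.
- have e : i' = 1 by slia.
  subst; have := bmin j' hj yI; split => //; slia.
Qed.

Lemma fe : Cn I -> (hP I <-> Mx I 0).
Proof.
case=> k [l [hkl hl k0 l1]]; split.
- case=> [k' [l' [m [[h1 h2 hm] [k0' l1' m0 m1]]]]].
  have [b [hb bI bmax]] := maxrow (ex_intro _ m (conj hm m0)).
  have mb := bmax m hm m0.
  exists b; split => //; apply/maxs_pt => //; split => // i' j' hi hj yI la lb.
  case: (ltnP i' 1) => hi'.
  + have e : i' = 0 by slia.
    subst; have := bmax j' hj yI; split => //; slia.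
  + have e : i' = 1 by slia.
    subst; exfalso; move/negP: m1; apply.
    by apply: (icpt icI l1' yI); slia.
- case=> b [hb bM]; have [bI H] := (@maxs_pt I 0 b erefl hb).1 bM.
  have lb : l < b.
    rewrite ltnNge; apply/negP => bl.
    by have [] := H 1 l erefl hl l1 erefl bl.
  exists k, l, b; split; first by split; slia.
  split => //; apply/negP => b1.
  by have [] := H 1 b erefl hb b1 erefl (leqnn _).
Qed.

Lemma ff : Cn I -> (hR I <-> Mn I 1).
Proof.
case=> k [l [hkl hl k0 l1]]; split.
- case=> [j [k' [l' [[h1 h2 hl'] [j1 k0' l1' j0]]]]].
  have hj : j <= n by slia.
  have [a [ha aI amin]] := minrow (ex_intro _ j (conj hj j1)).
  have aj := amin j hj j1.
  exists a; split => //; apply/mins_pt => //; split => // i' j' hi hjj yI la lb.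
  case: (ltnP i' 1) => hi'.
  + have e : i' = 0 by slia.
    subst; exfalso; move/negP: j0; apply.
    by apply: (icpt icI yI k0'); slia.
  + have e : i' = 1 by slia.
    subst; have := amin j' hjj yI; split => //; slia.
- case=> a [ha aM]; have [aI H] := (@mins_pt I 1 a erefl ha).1 aM.
  have ak : a < k.
    rewrite ltnNge; apply/negP => ka.
    by have [] := H 0 k erefl (leq_trans hkl hl) k0 erefl ka.
  exists a, k, l; split; first by split; slia.
  split => //; apply/negP => a0.
  by have [] := H 0 a erefl ha a0 erefl (leqnn _).
Qed.
End Facts.

Definition bP (P : Prop) : bool := if excluded_middle_informative P then true else false.
Lemma bPP P : reflect P (bP P).
Proof. by rewrite /bP; case: excluded_middle_informative => h; constructor. Qed.

Lemma card_row (D : {set T}) : {in D &, forall x y, x = y} -> #|D| = [exists x, x \in D].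
Proof.
move=> H; case: (set_0Vmem D) => [->|[x xD]].
  by rewrite cards0; case: existsP => // -[x]; rewrite inE.
have -> : D = [set x] by apply/setP => y; rewrite inE; apply/idP/eqP => [yD|->//]; exact: H.
by rewrite cards1; case: existsP => // H'; exfalso; apply: H'; exists x; rewrite inE.
Qed.

Lemma maxs_same (I : {set T}) x y : x \in Maxs le I -> y \in Maxs le I -> x.1 = y.1 -> x = y.
Proof.
rewrite !inE => /andP[xI /forallP Hx] /andP[yI /forallP Hy] e.
case: (leqP x.2 y.2) => h.
- have lxy : le x y by rewrite /le2n e leqnn h.
  by move: (Hx y); rewrite yI lxy /= => /eqP.
- have lyx : le y x by rewrite /le2n e leqnn ltnW.
  by move: (Hy x); rewrite xI lyx /= => /eqP.
Qed.

Lemma mins_same (I : {set T}) x y : x \in Mins le I -> y \in Mins le I -> x.1 = y.1 -> x = y.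
Proof.
rewrite !inE => /andP[xI /forallP Hx] /andP[yI /forallP Hy] e.
case: (leqP x.2 y.2) => h.
- have lxy : le x y by rewrite /le2n e leqnn h.
  by move: (Hy x); rewrite xI lxy /= => /eqP.
- have lyx : le y x by rewrite /le2n e leqnn ltnW.
  by move: (Hx y); rewrite yI lyx /= => /eqP.
Qed.

Definition Z : {set T} := [set x : T | nat_of_ord x.1 == 0].

Lemma Z_pt i j : i < 2 -> (pt i j \in Z) = (i == 0).
Proof. by move=> hi; rewrite inE pt1. Qed.

Lemma card_split (A : {set T}) : {in A &, forall x y, x.1 = y.1 -> x = y} ->
  #|A| = ([exists x, x \in A :&: Z] + [exists x, x \in A :\: Z])%N.
Proof.
move=> H; rewrite -(cardsID Z A) !card_row //.
- move=> x y; rewrite !inE => /andP[x1 xA] /andP[y1 yA]; apply: H => //.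
  apply: val_inj; have := ltn_ord x.1; have := ltn_ord y.1; move: x1 y1; rewrite /=; lia.
- move=> x y; rewrite !inE => /andP[xA /eqP x1] /andP[yA /eqP y1]; apply: H => //.
  by apply: val_inj; rewrite /= x1 y1.
Qed.

Lemma exZ (A : {set T}) : reflect (exists j, j <= n /\ pt 0 j \in A) [exists x, x \in A :&: Z].
Proof.
apply: (iffP existsP) => [[x]|[j [hj jA]]].
- dpt x; rewrite inE Z_pt // => /andP[xA /eqP e]; subst; by exists jx.
- by exists (pt 0 j); rewrite inE Z_pt // jA.
Qed.

Lemma exNZ (A : {set T}) : reflect (exists j, j <= n /\ pt 1 j \in A) [exists x, x \in A :\: Z].
Proof.
apply: (iffP existsP) => [[x]|[j [hj jA]]].
- dpt x; rewrite inE Z_pt // => /andP[e xA].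
  have e' : ix = 1 by slia.
  by subst; exists jx.
- by exists (pt 1 j); rewrite inE Z_pt // jA.
Qed.

Lemma statcnt (I : {set T}) : IC I ->
  (#|Maxs le I| + bP (hR I) = #|Mins le I| + bP (hP I))%N.
Proof.
move=> icI.
have c1 := @card_split (Maxs le I) (fun x y xM yM => @maxs_same I x y xM yM).
have c2 := @card_split (Mins le I) (fun x y xM yM => @mins_same I x y xM yM).
rewrite c1 c2.
have MxE i : Mx I i -> Ei I i by case=> j [hj]; rewrite inE => /andP[jI _]; exists j.
have MnE i : Mn I i -> Ei I i by case=> j [hj]; rewrite inE => /andP[jI _]; exists j.
case: (classic (Cn I)) => [hC|nC].
- have hE0 : Ei I 0 by case: hC => k [l [hkl hl k0 _]]; exists k; split => //; slia.
  have hE1 : Ei I 1 by case: hC => k [l [_ hl _ l1]]; exists l.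
  have e1 : [exists x, x \in Maxs le I :\: Z] = true by apply/exNZ; apply: fa.
  have e2 : [exists x, x \in Mins le I :&: Z] = true by apply/exZ; apply: fb.
  have e3 : bP (hR I) = [exists x, x \in Mins le I :\: Z].
    apply/idP/idP => H0.
    + by apply/exNZ; apply/(ff icI hC); apply/bPP.
    + by apply/bPP; apply/(ff icI hC); apply/exNZ.
  have e4 : bP (hP I) = [exists x, x \in Maxs le I :&: Z].
    apply/idP/idP => H0.
    + by apply/exZ; apply/(fe icI hC); apply/bPP.
    + by apply/bPP; apply/(fe icI hC); apply/exZ.
  rewrite e1 e2 e3 e4.
  move: [exists x, x \in Maxs le I :&: Z] [exists x, x \in Mins le I :\: Z] => a b.
  by case: a; case: b.
- have e3 : bP (hR I) = false.
    apply/bPP => -[j [k [l [[_ hkl hl] [_ k0 l1 _]]]]]; apply: nC; exists k, l; split => //.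
  have e4 : bP (hP I) = false.
    apply/bPP => -[k [l [m [[hkl hlm hm] [k0 l1 _ _]]]]]; apply: nC; exists k, l; split => //; slia.
  have e5 : [exists x, x \in Maxs le I :&: Z] = [exists x, x \in Mins le I :&: Z].
    apply/idP/idP => /exZ H0; apply/exZ.
    + exact: fb (MxE _ H0).
    + exact: fc nC (MnE _ H0).
  have e6 : [exists x, x \in Maxs le I :\: Z] = [exists x, x \in Mins le I :\: Z].
    apply/idP/idP => /exNZ H0; apply/exNZ.
    + exact: fd nC (MxE _ H0).
    + exact: fa (MnE _ H0).
  by rewrite e3 e4 e5 e6.
Qed.


Lemma main (L : seq T) : linear_extension le L ->
  mesic (rowmotion le L) IC (max_minus_min le) 0%R.
Proof.
move=> lL.
apply: (mesic_tele (h := fun S => bP (hR S))).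
- by move=> I icI; apply: foldr_ic.
- move=> I J icI icJ; exact: (row_inj (@phiK n) (@lephi n) lL icI icJ).
- move=> I icI; rewrite /max_minus_min.
  have E := statcnt icI.
  have eb : bP (hP I) = bP (hR (rowmotion le L I)).
    apply/idP/idP => /bPP H; apply/bPP; [exact: (forward lL icI H) | exact: (backward lL icI H)].
  rewrite eb in E.
  have E' := congr1 (fun k => k%:R : rat) E.
  rewrite /= !GRing.natrD in E'.
  lra.
Qed.
End F.

Unset Implicit Arguments.

Theorem theorem4p7 (n : nat) (L : seq (two_by_n n)) :
  (1 <= n)%N ->
  linear_extension (@le2n n) L ->
  mesic (rowmotion (@le2n n) L) (interval_closed (@le2n n))
        (max_minus_min (@le2n n)) 0%R.
Proof.
case: n L => [//|n] L _ lL; exact: main lL.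
Qed.
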